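(* Let $x,y>0$ with $x\ne y$, and define for $t\in(-\min\{x,y\},\infty)$ \[ H_{x,y}(t)=H(x+t,y+t)=\frac{2}{\frac{1}{x+t}+\frac{1}{y+t}}. \] Then $H_{x,y}(t)$ is a Bernstein function of $t$ on $(-\min\{x,y\},\infty)$ and has the integral representation \[ H_{x,y}(t)=H(x,y)+t+\frac{(x-y)^2}{4}\int_0^\infty\bigl(1-e^{-tu}\bigr)e^{-(x+y)u/2}\,\mathrm{d}u . \] Consequently, \[ H(x,y)=A(x,y)-\frac{(x-y)^2}{2}\int_0^\infty e^{-(x+y)u}\,\mathrm{d}u \] and, for $y>0$ and $s>0$, \[ H(s,y+s)=s+\frac{y^2}{4}\int_0^\infty\bigl(1-e^{-su}\bigr)e^{-yu/2}\,\mathrm{d}u . \]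
   Context: For positive numbers $a,b$, the harmonic mean is $H(a,b)=\frac{2}{\frac1a+\frac1b}$ and the arithmetic mean is $A(a,b)=\frac{a+b}{2}$. A function $f$ on an interval $I\subseteq\mathbb{R}$ is completely monotonic on $I$ if it has derivatives of all orders on $I$ and $(-1)^n f^{(n)}(t)\ge 0$ for all $t\in I$ and all integers $n\ge0$. A function $f:I\to[0,\infty)$ is a Bernstein function on $I$ if it has derivatives of all orders and $f'$ is completely monotonic on $I$. *)

(* Defs.v *)
From Stdlib Require Import Reals.
From Coquelicot Require Import Coquelicot.
Open Scope R_scope.

Definition Hmean (a b : R) : R := 2 / (1 / a + 1 / b).
Definition Amean (a b : R) : R := (a + b) / 2.

Definition smooth_on (I : R -> Prop) (f : R -> R) : Prop :=
  forall (n : nat) (t : R), I t -> ex_derive_n f n t.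

Definition completely_monotonic_on (I : R -> Prop) (f : R -> R) : Prop :=
  smooth_on I f /\
  forall (n : nat) (t : R), I t -> 0 <= (-1) ^ n * Derive_n f n t.

Definition Bernstein_on (I : R -> Prop) (f : R -> R) : Prop :=
  (forall t, I t -> 0 <= f t) /\ smooth_on I f /\
  completely_monotonic_on I (Derive f).

Definition ex_int_0_inf (g : R -> R) : Prop :=
  ex_RInt_gen g (at_point 0) (Rbar_locally p_infty).
Definition int_0_inf (g : R -> R) : R :=
  RInt_gen g (at_point 0) (Rbar_locally p_infty).

(* Main.v *)
Require Import Defs.
From Stdlib Require Import Reals Lra Lia Factorial.
From Coquelicot Require Import Coquelicot.
Open Scope R_scope.

Definition FF (a D : R) (n : nat) (s : R) : R :=
  match n with 0 => a + s | 1 => 1 | _ => 0 end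
  - D * ((-1) ^ n * INR (fact n)) * / (a + s) ^ (S n).

Lemma inv_pow_deriv a m s K : 0 < a + s ->
  is_derive (fun s => 0 - K * / (a + s) ^ m) s (0 - (K * (- INR m)) * / (a + s) ^ (S m)).
Proof.
  intros Hs. assert (Hn : a + s <> 0) by lra.
  auto_derive.
  - apply pow_nonzero; auto.
  - destruct m as [|m].
    + change RinvImpl.Rinv with Rinv. simpl. field. auto.
    + simpl Init.Nat.pred. change RinvImpl.Rinv with Rinv. change ((a+s)^(S (S m))) with ((a+s)*((a+s)*(a+s)^m)). change ((a+s)^(S m)) with ((a+s)*(a+s)^m). assert (HP : (a+s)^m <> 0) by (apply pow_nonzero; auto). set (P := (a+s)^m) in *. field. split; auto.
Qed.

Lemma FF_deriv a D n s : 0 < a + s -> is_derive (FF a D n) s (FF a D (S n) s).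
Proof.
  intros Hs.
  assert (Hn : a + s <> 0) by lra.
  unfold FF.
  destruct n as [|[|n]].
  - auto_derive; [auto|]. simpl. field. auto.
  - auto_derive; [repeat split; auto|]. simpl. field. auto.
  - set (m := S (S n)).
    set (K := D * ((-1) ^ m * INR (fact m))).
    change (is_derive (fun s => 0 - K * / (a + s) ^ (S m)) s
      (0 - D * ((-1) ^ (S m) * INR (fact (S m))) * / (a + s) ^ (S (S m)))).
    replace (D * ((-1) ^ (S m) * INR (fact (S m))))
      with (K * (- INR (S m))).
    2:{ unfold K. change (fact (S m)) with (S m * fact m)%nat.
        rewrite mult_INR. simpl pow. ring. }
    apply inv_pow_deriv; auto.
Qed.

Lemma FF_all (f : R -> R) (J : R -> Prop) a D :
  open J -> (forall t, J t -> 0 < a + t) -> (forall t, J t -> f t = FF a D 0 t) ->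
  forall n t, J t -> ex_derive_n f n t /\ Derive_n f n t = FF a D n t.
Proof.
  intros HI Hpos Hf n. induction n as [|n IH]; intros t Ht.
  - split; [exact Logic.I|]. simpl. auto.
  - assert (Hloc : locally t (fun s => Derive_n f n s = FF a D n s)).
    { apply (filter_imp J); [|apply HI; auto]. intros s Hs; apply IH; auto. }
    split.
    + simpl. apply ex_derive_ext_loc with (FF a D n).
      { apply (filter_imp (fun s => Derive_n f n s = FF a D n s)); [|exact Hloc].
        intros; auto. }
      eexists; apply FF_deriv; auto.
    + simpl. rewrite (Derive_ext_loc _ (FF a D n)) by exact Hloc.
      apply is_derive_unique, FF_deriv; auto.
Qed.

Lemma exp_int (c : R) : 0 < c ->
  is_RInt_gen (fun u => exp (- (c * u))) (at_point 0) (Rbar_locally p_infty) (/ c).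
Proof.
  intros Hc.
  set (G := fun u => - exp (- (c * u)) / c).
  assert (HD : forall u, is_derive G u (exp (- (c * u)))).
  { intros u. unfold G. auto_derive; [exact I|]. field. lra. }
  apply is_RInt_gen_ext with (Derive G).
  - apply Filter_prod with (fun _ => True) (fun _ => True); try easy.
    + apply filter_forall; easy.
    + intros a b _ _ z _. apply is_derive_unique, HD.
  - replace (/ c) with (0 - G 0).
    2:{ unfold G. rewrite Rmult_0_r, Ropp_0, exp_0. field. lra. }
    apply is_RInt_gen_Derive.
    + apply filter_forall; intros; eexists; apply HD.
    + apply filter_forall; intros ab z _.
      apply continuous_ext with (fun u => exp (- (c * u))).
      { intros; symmetry; apply is_derive_unique, HD. }
      apply (ex_derive_continuous (K:=R_AbsRing) (V:=R_NormedModule)). auto_derive. exact I.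
    + intros P HP. apply locally_singleton in HP. exact HP.
    + assert (H1 : is_lim (fun u => exp (- (c * u))) p_infty 0).
      { apply is_lim_comp with m_infty.
        - apply is_lim_exp_m.
        - apply (is_lim_ext (fun u => (- c) * u)). intros; ring.
          assert (E : Rbar_mult (-c) p_infty = m_infty).
          { simpl. destruct Rle_dec as [h|h]; [exfalso; lra|]. reflexivity. }
          rewrite <- E. apply is_lim_scal_l. apply is_lim_id.
        - exists 0. easy. }
      assert (H2 : is_lim G p_infty 0).
      { unfold G. apply (is_lim_ext (fun u => (- / c) * exp (- (c * u)))).
        intros; field; lra.
        eapply is_lim_scal_l in H1. simpl in H1. rewrite Rmult_0_r in H1. exact H1. }
      exact H2.
Qed.

Lemma int2 (c1 c2 : R) (g : R -> R) : 0 < c1 -> 0 < c2 ->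
  (forall u, g u = exp (- (c1 * u)) - exp (- (c2 * u))) ->
  ex_int_0_inf g /\ int_0_inf g = / c1 - / c2.
Proof.
  intros H1 H2 Hg.
  assert (H : is_RInt_gen g (at_point 0) (Rbar_locally p_infty) (/ c1 - / c2)).
  { apply is_RInt_gen_ext with (fun u => minus (exp (- (c1 * u))) (exp (- (c2 * u)))).
    - apply Filter_prod with (fun _ => True) (fun _ => True).
      + apply filter_forall; easy.
      + apply filter_forall; easy.
      + intros ? ? _ _ z _; rewrite Hg; reflexivity.
    - apply (is_RInt_gen_minus _ _ (/ c1) (/ c2)); apply exp_int; auto. }
  split.
  - eexists; exact H.
  - apply is_RInt_gen_unique; exact H.
Qed.

Lemma m1_sq (k : nat) : (-1) ^ k * (-1) ^ k = 1.
Proof. rewrite <- Rpow_mult_distr. replace (-1 * -1) with 1 by ring. apply pow1. Qed.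

Theorem theorem3p1 (x y : R) (hx : 0 < x) (hy : 0 < y) (hxy : x <> y) :
  let I := fun t : R => - Rmin x y < t in
  let Hxy := fun t : R => Hmean (x + t) (y + t) in
  Bernstein_on I Hxy /\
  (forall t : R, I t ->
     ex_int_0_inf (fun u => (1 - exp (- (t * u))) * exp (- ((x + y) * u / 2))) /\
     Hxy t = Hmean x y + t + (x - y) ^ 2 / 4 *
       int_0_inf (fun u => (1 - exp (- (t * u))) * exp (- ((x + y) * u / 2)))) /\
  (ex_int_0_inf (fun u => exp (- ((x + y) * u))) /\
   Hmean x y = Amean x y - (x - y) ^ 2 / 2 *
     int_0_inf (fun u => exp (- ((x + y) * u)))) /\
  (forall y' s : R, 0 < y' -> 0 < s ->
     ex_int_0_inf (fun u => (1 - exp (- (s * u))) * exp (- (y' * u / 2))) /\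
     Hmean s (y' + s) = s + y' ^ 2 / 4 *
       int_0_inf (fun u => (1 - exp (- (s * u))) * exp (- (y' * u / 2)))).
Proof.
  intros I Hxy.
  set (a := (x + y) / 2). set (D := (x - y) ^ 2 / 4).
  assert (HIx : forall t, I t -> 0 < x + t).
  { intros t Ht. unfold I in Ht. pose proof (Rmin_l x y). lra. }
  assert (HIy : forall t, I t -> 0 < y + t).
  { intros t Ht. unfold I in Ht. pose proof (Rmin_r x y). lra. }
  assert (HIa : forall t, I t -> 0 < a + t).
  { intros t Ht. pose proof (HIx t Ht). pose proof (HIy t Ht). unfold a. lra. }
  assert (HF0 : forall t, I t -> Hxy t = FF a D 0 t).
  { intros t Ht. pose proof (HIx t Ht). pose proof (HIy t Ht). pose proof (HIa t Ht).
    unfold Hxy, Hmean, FF, D, a in *. simpl. field. lra. }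
  assert (HopI : open I) by apply open_gt.
  pose proof (FF_all Hxy I a D HopI HIa HF0) as HA.
  assert (HD : 0 <= D) by (unfold D; apply Rmult_le_pos; [apply pow2_ge_0 | lra]).
  split; [|split; [|split]].
  - split; [|split].
    + intros t Ht. rewrite HF0 by auto. unfold FF. simpl.
      pose proof (HIx t Ht). pose proof (HIy t Ht). pose proof (HIa t Ht).
      replace (a + t - D * (1 * 1) * / ((a + t) * 1)) with ((x + t) * (y + t) / (a + t)).
      2:{ unfold D, a in *. field. lra. }
      apply Rlt_le. apply Rdiv_lt_0_compat; [apply Rmult_lt_0_compat|]; auto.
    + intros n t Ht. apply HA; auto.
    + assert (Hc : forall m s, Derive_n (Derive Hxy) m s = Derive_n Hxy (S m) s).
      { intros m s. replace (S m) with (m + 1)%nat by lia.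
        rewrite <- Derive_n_comp. reflexivity. }
      split.
      * intros n t Ht. destruct n as [|m]; [exact Logic.I|].
        simpl. apply ex_derive_ext with (Derive_n Hxy (S m)).
        { intros; symmetry; apply Hc. }
        apply (HA (S (S m)) t Ht).
      * intros n t Ht. rewrite Hc. rewrite (proj2 (HA (S n) t Ht)).
        pose proof (HIa t Ht) as Hat.
        assert (Hinv : forall k, 0 < / (a + t) ^ k).
        { intros k. apply Rinv_0_lt_compat, pow_lt; auto. }
        destruct n as [|m].
        -- unfold FF. simpl.
           pose proof (Hinv 2%nat). simpl in H.
           assert (0 <= D * / ((a + t) * ((a + t) * 1))) by (apply Rmult_le_pos; lra).
           nra.
        -- unfold FF.
           replace ((-1) ^ S m * (0 - D * ((-1) ^ S (S m) * INR (fact (S (S m)))) * / (a + t) ^ S (S (S m))))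
             with (D * INR (fact (S (S m))) * / (a + t) ^ S (S (S m))).
           2:{ change ((-1) ^ S (S m)) with (-1 * (-1) ^ S m).
               pose proof (m1_sq (S m)) as Hm.
               set (e := (-1) ^ S m) in *. set (F := INR (fact (S (S m)))).
               set (P := / (a + t) ^ S (S (S m))).
               transitivity ((e * e) * (D * F * P)); [rewrite Hm; ring | ring]. }
           apply Rmult_le_pos; [apply Rmult_le_pos; [auto | apply pos_INR]|].
           apply Rlt_le, Hinv.
  - intros t Ht.
    pose proof (HIx t Ht). pose proof (HIy t Ht). pose proof (HIa t Ht).
    assert (Ha : 0 < a) by (unfold a; lra).
    destruct (int2 a (a + t) (fun u => (1 - exp (- (t * u))) * exp (- ((x + y) * u / 2))))
      as [Hex Hval]; auto.
    { intros u. rewrite Rmult_minus_distr_r, Rmult_1_l, <- exp_plus.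
      unfold a. f_equal; f_equal; field. }
    split; auto. rewrite Hval. unfold Hxy, Hmean, a, D in *. field. repeat split; lra.
  - assert (Hc : 0 < x + y) by lra.
    pose proof (exp_int (x + y) Hc) as H.
    split; [eexists; exact H|].
    unfold int_0_inf. rewrite (is_RInt_gen_unique _ _ H). unfold Hmean, Amean. field. lra.
  - intros y' s Hy' Hs.
    destruct (int2 (y' / 2) (s + y' / 2) (fun u => (1 - exp (- (s * u))) * exp (- (y' * u / 2))))
      as [Hex Hval]; try lra.
    { intros u. rewrite Rmult_minus_distr_r, Rmult_1_l, <- exp_plus.
      f_equal; f_equal; field. }
    split; auto. rewrite Hval. unfold Hmean. field. repeat split; lra.
Qed.
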